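(* Let $\mathcal G$ be a temporal graph with vertex set $V$, $|V|=n$, and all labels in $\{1,\dots,\tau\}$, considered with non-strict journeys. Then there exists a temporal graph $\mathcal H$ with the same vertex set $V$, all labels in $\{1,\dots,\tau\}$, and at most $n(n+1)\tau/2$ contacts, such that for all $u,v\in V$ there is a non-strict journey from $u$ to $v$ in $\mathcal G$ if and only if there is a strict journey from $u$ to $v$ in $\mathcal H$. In particular, the non-strict reachability graph of $\mathcal G$ equals the strict reachability graph of $\mathcal H$.
   Context: A temporal graph is a triple $\mathcal G=(V,E,\lambda)$ where $V$ is a finite vertex set, $E$ is a set of undirected edges on $V$, and $\lambda:E\to 2^{\mathbb N}\setminus\{\emptyset\}$ assigns to each edge a nonempty set of presence times. The footprint of $\mathcal G$ is the static graph $(V,E)$. A contact is a pair $(e,t)$ with $e\in E$ and $t\in\lambda(e)$. A journey from $u$ to $v$ is a sequence of contacts $(e_1,t_1),\dots,(e_k,t_k)$, $k\ge 1$, such that $e_1,\dots,e_k$ form a path from $u$ to $v$ in the footprint and $t_1\le t_2\le\dots\le t_k$ (a non-strict journey); it is strict if $t_1<t_2<\dots<t_k$. The reachability graph (with respect to a chosen journey notion) is the directed graph on $V$ having an arc $(u,v)$, $u\neq v$, if and only if there is a journey from $u$ to $v$. *)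

(* Defs.v *)
From mathcomp Require Import all_boot.
Set Implicit Arguments. Unset Strict Implicit. Unset Printing Implicit Defensive.

(* A temporal graph on a finite vertex type V: an edge set E of undirected
   edges (2-element subsets of V) and a labelling lam : edge -> (set of times),
   a time set being given as a predicate on nat. *)
Record tgraph (V : finType) := TGraph {
  tE : {set {set V}};
  tlam : {set V} -> nat -> bool
}.

Definition tgraph_wf (V : finType) (G : tgraph V) : Prop :=
  forall e, e \in tE G -> #|e| = 2 /\ exists t, tlam G e t.

Definition labels_in (V : finType) (G : tgraph V) (tau : nat) : Prop :=
  forall e t, e \in tE G -> tlam G e t -> 1 <= t <= tau.

(* Number of contacts (e,t), e in E, t in lam e, counting times t <= tau
   (this is the exact number of contacts when labels_in G tau holds). *)
Definition ncontacts (V : finType) (G : tgraph V) (tau : nat) : nat :=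
  \sum_(e in tE G) #|[set t : 'I_tau.+1 | tlam G e t]|.

(* A journey from u to v: a nonempty sequence of contacts
   ({x_0,x_1},t_1),...,({x_{k-1},x_k},t_k), encoded as the list
   [(x_1,t_1);...;(x_k,t_k)] with x_0 = u, x_k = v, the x_i pairwise distinct
   (a path in the footprint), each {x_{i-1},x_i} in E with t_i in lam, and
   times non-decreasing (non-strict) or increasing (strict). *)
Definition journey (V : finType) (G : tgraph V) (strict : bool) (u v : V) : Prop :=
  exists s : seq (V * nat),
    [/\ s != [::],
        uniq (u :: map fst s),
        last u (map fst s) = v,
        path (fun a b : V * nat =>
                ([set a.1; b.1] \in tE G) && tlam G [set a.1; b.1] b.2)
             (u, 0) s
      & sorted (fun a b : nat => if strict then a < b else a <= b) (map snd s)].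

Definition reach_arc (V : finType) (G : tgraph V) (strict : bool) (u v : V) : Prop :=
  u <> v /\ journey G strict u v.

(* Main.v *)
Require Import Defs.
From mathcomp Require Import all_boot.
Set Implicit Arguments. Unset Strict Implicit. Unset Printing Implicit Defensive.

Definition wrel (V : eqType) (R : V -> V -> nat -> bool) : rel (V * nat) :=
  fun a b => R a.1 b.1 b.2.

Lemma path_fst (V : eqType) R (x y : V * nat) s :
  x.1 = y.1 -> path (wrel R) x s = path (wrel R) y s.
Proof. by case: s => //= b s; rewrite /wrel => ->. Qed.

Lemma shortcut (V : eqType) (R : V -> V -> nat -> bool) (ord : rel nat)
  (tr : transitive ord) (Rirr : forall x y t, R x y t -> x != y) s :
  forall u, u != last u (map fst s) -> s != [::] -> path (wrel R) (u, 0) s ->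
  sorted ord (map snd s) ->
  exists s', [/\ s' != [::], uniq (u :: map fst s'),
     last u (map fst s') = last u (map fst s), path (wrel R) (u, 0) s'
     & sorted ord (map snd s') && subseq s' s].
Proof.
elim: s => // a s IH u /= hne _ /andP [hua hp] hs.
have hua' : u != a.1 by apply: (Rirr _ _ _ hua).
case: s IH hne hp hs => [|b s] IH hne hp hs.
  exists [:: a]; split => //=.
  - by rewrite inE hua'.
  - by rewrite hua.
  - by rewrite /= eqxx ?sub0seq.
set w := last a.1 (map fst (b :: s)).
case: (eqVneq a.1 w) => haw.
  exists [:: a]; split => //=.
  - by rewrite inE hua'.
  - by rewrite hua.
  - by rewrite eqxx.
have hp' : path (wrel R) (a.1, 0) (b :: s) by rewrite (@path_fst _ _ _ a).
have [s'' [h1 h2 h3 h4 /andP [h5 h6]]] := IH a.1 haw isT hp' (path_sorted hs).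
have hall : all (ord a.2) (map snd s'').
  move: hs; rewrite (path_sortedE tr) => /andP [hall _].
  apply/allP => t /mapP [p hp1 ->]; apply: (allP hall).
  by apply: map_f; apply: (mem_subseq h6).
case hu: (u \in map fst s'').
  move/mapP: hu => [p hps hpu].
  case/splitPr: hps h1 h2 h3 h4 h5 h6 hall => p1 p2 h1 h2 h3 h4 h5 h6 hall.
  case: p2 h1 h2 h3 h4 h5 h6 hall => [|c p2] h1 h2 h3 h4 h5 h6 hall.
    exfalso; move: h3; rewrite map_cat last_cat /= -hpu => hh.
    by move: hne; rewrite /= hh eqxx.
  have hsub : subseq (c :: p2) (a :: b :: s).
    apply: subseq_trans (subseq_cons _ _).
    apply: subseq_trans h6.
    have -> : p1 ++ [:: p, c & p2] = (p1 ++ [:: p]) ++ c :: p2 by rewrite -catA.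
    exact: suffix_subseq.
  exists (c :: p2); split; [done| | | | apply/andP; split; last exact hsub].
  - move: h2; rewrite map_cat -cat_cons cat_uniq => /and3P [_ _].
    by rewrite hpu.
  - by rewrite /w -h3 map_cat last_cat.
  - move: h4; rewrite cat_path => /andP [_ /= /andP [_ /andP [hpc hh]]].
    by rewrite /= hh andbT /wrel /= hpu.
  - move: h5; rewrite map_cat => /cat_sorted2 [_ hh].
    exact: path_sorted hh.
exists (a :: s''); split; [done| | | |apply/andP; split].
- by rewrite /= inE negb_or hua' hu; move: h2 => /= ->.
- done.
- by rewrite /= hua (@path_fst _ _ a (a.1, 0)).
- by rewrite /= (path_sortedE tr) hall h5.
- by rewrite /= eqxx.
Qed.

Definition Gt (V : finType) (G : tgraph V) (t : nat) : rel V :=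
  fun x y => ([set x; y] \in tE G) && tlam G [set x; y] t.
Definition RG (V : finType) (G : tgraph V) : V -> V -> nat -> bool :=
  fun x y t => Gt G t x y.
Definition Hlam (V : finType) (G : tgraph V) (tau : nat) (e : {set V}) (t : nat) :=
  (1 <= t <= tau) &&
  [exists x, [exists y, (x != y) && (e == [set x; y]) && connect (Gt G t) x y]].
Definition Hgraph (V : finType) (G : tgraph V) (tau : nat) : tgraph V :=
  TGraph [set e : {set V} | [exists t : 'I_tau.+1, Hlam G tau e t]] (Hlam G tau).

Lemma Gt_sym (V : finType) (G : tgraph V) t : symmetric (Gt G t).
Proof. by move=> x y; rewrite /Gt setUC. Qed.

Lemma RG_irr (V : finType) (G : tgraph V) : tgraph_wf G ->
  forall x y t, RG G x y t -> x != y.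
Proof.
move=> wf x y t /andP [hE _]; have [h2 _] := wf _ hE.
by move: h2; rewrite cards2; case: (x != y).
Qed.

Lemma RG_lab (V : finType) (G : tgraph V) tau : labels_in G tau ->
  forall x y t, RG G x y t -> 1 <= t <= tau.
Proof. by move=> lab x y t /andP [hE hl]; exact: lab hE hl. Qed.

Lemma RH_of_conn (V : finType) (G : tgraph V) tau x y t :
  x != y -> 1 <= t <= tau -> connect (Gt G t) x y -> RG (Hgraph G tau) x y t.
Proof.
move=> hxy hb hc.
have hl : Hlam G tau [set x; y] t.
  rewrite /Hlam hb /=; apply/existsP; exists x; apply/existsP; exists y.
  by rewrite hxy eqxx hc.
apply/andP; split => //=.
rewrite inE; apply/existsP.
have ht : t < tau.+1 by case/andP: hb.
by exists (Ordinal ht).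
Qed.

Lemma conn_of_RH (V : finType) (G : tgraph V) tau x y t :
  RG (Hgraph G tau) x y t -> [/\ x != y, connect (Gt G t) x y & 1 <= t <= tau].
Proof.
move=> /andP [_ /andP [hb /existsP [x' /existsP [y' /andP [/andP [hxy /eqP he] hc]]]]].
have hxy2 : x != y.
  have : #|[set x; y]| = 2 by rewrite he cards2 hxy.
  by rewrite cards2; case: (x != y).
have sym := sym_connect_sym (@Gt_sym _ G t).
have hx : x \in [set x; y] by rewrite !inE eqxx.
have hy : y \in [set x; y] by rewrite !inE eqxx orbT.
rewrite he !inE in hx hy.
split => //.
case/orP: hx => /eqP hx; case/orP: hy => /eqP hy; subst x y.
- by rewrite eqxx in hxy2.
- by [].
- by rewrite sym.
- by rewrite eqxx in hxy2.
Qed.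

Lemma H_wf (V : finType) (G : tgraph V) tau : tgraph_wf (Hgraph G tau).
Proof.
move=> e; rewrite inE => /existsP [t ht]; split; last by exists t.
move: ht => /andP [_ /existsP [x' /existsP [y' /andP [/andP [hxy /eqP ->] _]]]].
by rewrite cards2 hxy.
Qed.

Lemma H_lab (V : finType) (G : tgraph V) tau : labels_in (Hgraph G tau) tau.
Proof. by move=> e t _ /andP []. Qed.

Lemma all_mem_sub (T : eqType) (x : T) l l' :
  all (fun t => t \in l) l' -> all (fun t => t \in x :: l) l'.
Proof. by move=> h; apply/allP => t ht; rewrite inE (allP h t ht) orbT. Qed.

Lemma GH (V : finType) (G : tgraph V) tau (wf : tgraph_wf G) (lab : labels_in G tau) s :
  forall u, path (wrel (RG G)) (u, 0) s -> sorted leq (map snd s) -> s != [::] ->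
  u = last u (map fst s) \/
  exists s', [/\ s' != [::], last u (map fst s') = last u (map fst s),
     path (wrel (RG (Hgraph G tau))) (u, 0) s', sorted ltn (map snd s')
   & all (fun t => t \in map snd s) (map snd s')].
Proof.
elim: s => // a s IH u /andP [hua hp] hs _.
have hua' : u != a.1 := RG_irr wf hua.
have hb : 1 <= a.2 <= tau := RG_lab lab hua.
have hc : RG (Hgraph G tau) u a.1 a.2 := RH_of_conn hua' hb (connect1 hua).
have hp' : path (wrel (RG G)) (a.1, 0) s by rewrite (@path_fst _ _ _ a).
case: s IH hp hs hp' => [|b s] IH hp hs hp'.
  right; exists [:: a]; split => //=.
  - by rewrite andbT; exact hc.
  - by rewrite inE eqxx.
case: (IH a.1 hp' (path_sorted hs) isT) => [hl | [s'' [h1 h3 h4 h2 h5]]].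
  right; exists [:: a]; split => //=.
  - by rewrite andbT; exact hc.
  - by rewrite inE eqxx.
have hall : all (leq a.2) (map snd s'').
  have hs' : path leq a.2 (map snd (b :: s)) := hs.
  move: hs'; rewrite (path_sortedE leq_trans) => /andP [hall _].
  by apply/allP => t ht; apply: (allP hall); apply: (allP h5).
case: s'' h1 h2 h3 h4 h5 hall => [//|c s3] h1 h2 h3 h4 h5 hall.
move: h4 => /= /andP [hac hp3].
have [_ hcon _] := conn_of_RH hac.
case: (eqVneq c.2 a.2) => hca.
  have huc : connect (Gt G a.2) u c.1.
    by apply: connect_trans (connect1 hua) _; rewrite -hca.
  case: (eqVneq u c.1) => huc1.
    case: s3 h1 h2 h3 hp3 h5 hall => [|d s3] h1 h2 h3 hp3 h5 hall.
      by left; move: h3 => /= <-.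
    right; exists (d :: s3); split => //.
    - by rewrite (@path_fst _ _ _ c).
    - exact: path_sorted h2.
    - apply: all_mem_sub; move: h5 => /= /andP [_ ->]; done.
  right; exists (c :: s3); split => //.
  - rewrite /= hp3 andbT; apply: RH_of_conn => //; by rewrite hca.
  - exact: all_mem_sub.
right; exists (a :: c :: s3); split => //.
- apply/andP; split; first exact hc.
  by apply/andP; split; [exact hac | exact hp3].
- rewrite /= ltn_neqAle eq_sym hca /=; move: hall => /= /andP [-> _].
  exact: h2.
- rewrite /= inE eqxx /=; exact: (all_mem_sub a.2 h5).
Qed.

Lemma map_fst_pair (V : Type) (p : seq V) (t : nat) :
  map fst (map (fun z => (z, t)) p) = p.
Proof. by elim: p => //= z p ->. Qed.

Lemma map_snd_pair (V : Type) (p : seq V) (t : nat) :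
  map snd (map (fun z => (z, t)) p) = nseq (size p) t.
Proof. by elim: p => //= z p ->. Qed.

Lemma last_pair (V : Type) (p : seq V) (t : nat) x y :
  (last (x, y) (map (fun z => (z, t)) p)).1 = last x p.
Proof. by elim: p x y => //= z p IH x y; rewrite IH. Qed.

Lemma path_pair (V : finType) (G : tgraph V) t p : forall x y,
  path (Gt G t) x p -> path (wrel (RG G)) (x, y) (map (fun z => (z, t)) p).
Proof.
elim: p => //= z p IH x y /andP [h1 h2].
by apply/andP; split; [exact h1 | exact: IH].
Qed.

Lemma sorted_nseq_cat k t l :
  sorted leq l -> all (leq t) l -> sorted leq (nseq k t ++ l).
Proof.
move=> hl ha; elim: k => // k IH /=.
rewrite (path_sortedE leq_trans) IH andbT all_cat ha andbT all_nseq.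
by rewrite leqnn orbT.
Qed.

Lemma HG (V : finType) (G : tgraph V) tau s :
  forall u, path (wrel (RG (Hgraph G tau))) (u, 0) s -> sorted ltn (map snd s) ->
  s != [::] ->
  exists s', [/\ s' != [::], last u (map fst s') = last u (map fst s),
     path (wrel (RG G)) (u, 0) s', sorted leq (map snd s')
   & all (fun t => t \in map snd s) (map snd s')].
Proof.
elim: s => // a s IH u /andP [hua hp] hs _.
have [hne hcon hb] := conn_of_RH hua.
case/connectP: hcon => p hpp hlast.
have hpne : p != [::] by case: p hpp hlast => // _ /= hh; rewrite hh eqxx in hne.
set P := map (fun z => (z, a.2)) p.
have hPne : P != [::] by rewrite /P; case: (p) hpne.
have hP1 : map fst P = p by exact: map_fst_pair.
have hP2 : map snd P = nseq (size p) a.2 by exact: map_snd_pair.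
have hPp : path (wrel (RG G)) (u, 0) P by exact: path_pair.
have hPl : (last (u, 0) P).1 = a.1 by rewrite last_pair.
case: s IH hp hs => [|b s] IH hp hs.
  exists P; split => //.
  - by rewrite hP1 -hlast.
  - by rewrite hP2 -[nseq _ _]cats0; apply: sorted_nseq_cat.
  - by rewrite hP2 all_nseq /= inE eqxx orbT.
have hp' : path (wrel (RG (Hgraph G tau))) (a.1, 0) (b :: s) by rewrite (@path_fst _ _ _ a).
have [s'' [h1 h3 h4 h2 h5]] := IH a.1 hp' (path_sorted hs) isT.
have hs' : path ltn a.2 (map snd (b :: s)) := hs.
move: hs'; rewrite (path_sortedE ltn_trans) => /andP [hall _].
exists (P ++ s''); split.
- by move: hPne; case: (P).
- by rewrite map_cat last_cat hP1 -hlast h3.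
- rewrite cat_path hPp /=.
  by rewrite (@path_fst _ _ _ (a.1, 0)).
- rewrite map_cat hP2; apply: sorted_nseq_cat => //.
  apply/allP => t ht; apply: ltnW; apply: (allP hall); exact: (allP h5).
- rewrite map_cat all_cat hP2 all_nseq /= inE eqxx orbT /=.
  exact: all_mem_sub.
Qed.

Lemma journey_neq (V : eqType) (u v : V) (s : seq (V * nat)) :
  s != [::] -> uniq (u :: map fst s) -> last u (map fst s) = v -> u != v.
Proof.
case: s => // a s _ /= /andP [hu _] <-; apply/eqP => e.
by move: hu; rewrite {1}e mem_last.
Qed.

Lemma count_H (V : finType) (G : tgraph V) tau :
  ncontacts (Hgraph G tau) tau <= (#|V| * (#|V| + 1) * tau) %/ 2.
Proof.
rewrite /ncontacts /=.
apply: (@leq_trans (\sum_(e in [set e : {set V} | [exists t : 'I_tau.+1, Hlam G tau e t]]) tau)).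
  apply: leq_sum => e _.
  apply: leq_trans (subset_leq_card (B := [set~ (ord0 : 'I_tau.+1)]) _) _.
    apply/subsetP => t; rewrite !inE => /andP [/andP [h1 _] _].
    by apply/eqP => e0; rewrite e0 in h1.
  by rewrite cardsC1 card_ord.
rewrite sum_nat_const.
have hc : #|[set e : {set V} | [exists t : 'I_tau.+1, Hlam G tau e t]]| <= 'C(#|V|, 2).
  rewrite -card_draws; apply: subset_leq_card; apply/subsetP => e he.
  by rewrite inE; have [-> _] := H_wf he.
apply: (@leq_trans ('C(#|V|, 2) * tau)); first by rewrite leq_mul2r hc orbT.
rewrite leq_divRL // mulnAC.
have := bin_ffact #|V| 2; rewrite ffactnS ffactn1 /= => ->.
apply: leq_mul => //; apply: leq_mul => //.
rewrite addn1; exact: leq_trans (leq_pred _) (leqnSn _).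
Qed.

Theorem mainTheorem10 (V : finType) (tau : nat) (G : tgraph V) :
  tgraph_wf G -> labels_in G tau ->
  exists H : tgraph V,
    [/\ tgraph_wf H, labels_in H tau,
        ncontacts H tau <= (#|V| * (#|V| + 1) * tau) %/ 2,
        (forall u v : V, journey G false u v <-> journey H true u v)
      & (forall u v : V, reach_arc G false u v <-> reach_arc H true u v)].
Proof.
move=> wf lab.
have HJ : forall u v : V, journey G false u v <-> journey (Hgraph G tau) true u v.
  move=> u v; split.
    move=> [s [hne huq hl hp hs]].
    have uv := journey_neq hne huq hl.
    case: (GH wf lab hp hs hne) => [e | [s' [h1 h2 h3 h4 h5]]].
      by rewrite -hl -e eqxx in uv.
    have hirr : forall x y t, RG (Hgraph G tau) x y t -> x != y.
      by move=> x y t h; case: (conn_of_RH h).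
    have hne' : u != last u (map fst s') by rewrite h2 hl.
    have [s'' [g1 g2 g3 g4 /andP [g5 _]]] :=
      shortcut ltn_trans hirr hne' h1 h3 h4.
    exists s''; split => //; by rewrite g3 h2.
  move=> [s [hne huq hl hp hs]].
  have uv := journey_neq hne huq hl.
  have [s' [h1 h2 h3 h4 h5]] := HG hp hs hne.
  have hne' : u != last u (map fst s') by rewrite h2 hl.
  have [s'' [g1 g2 g3 g4 /andP [g5 _]]] :=
    shortcut leq_trans (RG_irr wf) hne' h1 h3 h4.
  exists s''; split => //; by rewrite g3 h2.
exists (Hgraph G tau); split.
- exact: H_wf.
- exact: H_lab.
- exact: count_H.
- exact: HJ.
- move=> u v; rewrite /reach_arc; split => [[h1 h2]|[h1 h2]]; split => //.
  + exact: (proj1 (HJ u v) h2).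
  + exact: (proj2 (HJ u v) h2).
Qed.
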